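(* Let $R$ be a $*$-ring. Then $R$ is strongly $J$-$*$-clean if and only if (1) $R$ is strongly $*$-clean, and (2) for every maximal ideal $M$ of $R$, $1$ is not the sum of two units in $R/M$.
   Context: All rings are associative with identity. A $*$-ring is a ring $R$ with an involution $*$, i.e. a map $a\mapsto a^*$ with $(a+b)^*=a^*+b^*$, $(ab)^*=b^*a^*$, $(a^* )^*=a$. $U(R)$ denotes the group of units and $J(R)$ the Jacobson radical of $R$. A projection is an element $e$ with $e^2=e=e^*$. $R$ is strongly $J$-$*$-clean if every $a\in R$ can be written $a=e+u$ with $e$ a projection, $u\in J(R)$ and $ae=ea$. $R$ is strongly $*$-clean if every $a\in R$ can be written $a=e+u$ with $e$ a projection, $u\in U(R)$ and $eu=ue$. Maximal ideals are two-sided. *)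

(* Defs.v *)
From mathcomp Require Import all_boot all_algebra.
Set Implicit Arguments. Unset Strict Implicit. Unset Printing Implicit Defensive.
Import GRing.Theory.
Local Open Scope ring_scope.

Section Defs.
Variable R : pzRingType.

Definition is_involution (star : R -> R) : Prop :=
  [/\ forall a b, star (a + b) = star a + star b,
      forall a b, star (a * b) = star b * star a
    & forall a, star (star a) = a].

Definition is_unit (u : R) : Prop := exists v : R, u * v = 1 /\ v * u = 1.

Definition is_projection (star : R -> R) (e : R) : Prop :=
  e * e = e /\ star e = e.

Definition add_subgroup (I : R -> Prop) : Prop :=
  I 0 /\ forall x y, I x -> I y -> I (x - y).

Definition left_ideal (I : R -> Prop) : Prop :=
  add_subgroup I /\ forall r x, I x -> I (r * x).

Definition two_sided_ideal (I : R -> Prop) : Prop :=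
  [/\ add_subgroup I, forall r x, I x -> I (r * x) & forall r x, I x -> I (x * r)].

Definition maximal_left_ideal (I : R -> Prop) : Prop :=
  [/\ left_ideal I, ~ I 1 &
      forall K, left_ideal K -> (forall x, I x -> K x) -> ~ K 1 ->
        forall x, K x -> I x].

Definition maximal_ideal (M : R -> Prop) : Prop :=
  [/\ two_sided_ideal M, ~ M 1 &
      forall K, two_sided_ideal K -> (forall x, M x -> K x) -> ~ K 1 ->
        forall x, K x -> M x].

Definition jacobson (x : R) : Prop :=
  forall I, maximal_left_ideal I -> I x.

Definition strongly_J_star_clean (star : R -> R) : Prop :=
  forall a : R, exists e u : R,
    [/\ a = e + u, is_projection star e, jacobson u & a * e = e * a].

Definition strongly_star_clean (star : R -> R) : Prop :=
  forall a : R, exists e u : R,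
    [/\ a = e + u, is_projection star e, is_unit u & e * u = u * e].

(* x + M is a unit of the quotient ring R/M *)
Definition unit_mod (M : R -> Prop) (x : R) : Prop :=
  exists y : R, M (x * y - 1) /\ M (y * x - 1).

Definition one_sum_two_units_mod (M : R -> Prop) : Prop :=
  exists u v : R, [/\ unit_mod M u, unit_mod M v & M (1 - (u + v))].

End Defs.

(* Main.v *)
Require Import Defs.
From mathcomp Require Import all_boot all_algebra.
From mathcomp Require classical_sets.
From Stdlib Require Import Classical.
Set Implicit Arguments. Unset Strict Implicit. Unset Printing Implicit Defensive.
Import GRing.Theory.
Local Open Scope ring_scope.

Section Aux.
Variable R : pzRingType.
Implicit Types I L M K : R -> Prop.

Lemma sg_neg I : add_subgroup I -> forall x, I x -> I (- x).
Proof. by move=> [I0 Is] x Ix; rewrite -sub0r; apply: Is. Qed.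

Lemma sg_add I : add_subgroup I -> forall x y, I x -> I y -> I (x + y).
Proof.
move=> sg x y Ix Iy; rewrite -[y]opprK; apply: sg.2 => //; exact: sg_neg.
Qed.

Lemma max_left_gen L x : maximal_left_ideal L -> ~ L x ->
  exists l r, L l /\ 1 = l + r * x.
Proof.
move=> [[[L0 Ls] Lm] L1 Lmax] Lx.
pose K z := exists l r, L l /\ z = l + r * x.
have Kli : left_ideal K.
  split; first split.
  - by exists 0, 0; rewrite mul0r addr0.
  - move=> a b [l1 [r1 [Hl1 ->]]] [l2 [r2 [Hl2 ->]]].
    exists (l1 - l2), (r1 - r2); split; first exact: Ls.
    by rewrite mulrBl opprD addrACA.
  - move=> s a [l [r [Hl ->]]]; exists (s * l), (s * r); split; first exact: Lm.
    by rewrite mulrDr mulrA.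
case: (classic (K 1)) => [[l [r [Hl E]]]|nK1]; first by exists l, r.
exfalso; apply: Lx; apply: (Lmax K Kli) => //.
  by move=> z Lz; exists z, 0; rewrite mul0r addr0.
by exists 0, 1; rewrite mul1r add0r.
Qed.

Lemma J0 : jacobson (0 : R).
Proof. by move=> L [[[L0 _] _] _ _]. Qed.

Lemma Jsub (x y : R) : jacobson x -> jacobson y -> jacobson (x - y).
Proof. by move=> Jx Jy L HL; case: (HL) => [[[_ Ls] _] _ _]; apply: Ls; [apply: Jx|apply: Jy]. Qed.

Lemma Jsg : add_subgroup (@jacobson R).
Proof. split; [exact: J0 | exact: Jsub]. Qed.

Lemma Jleft (r x : R) : jacobson x -> jacobson (r * x).
Proof. by move=> Jx L HL; case: (HL) => [[_ Lm] _ _]; apply: Lm; apply: Jx. Qed.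


Definition PZ (I0 A : R -> Prop) := [/\ (forall x y, A x -> A y -> A (x - y)),
   (forall r x, A x -> A (r * x)), ~ A 1 &
   ((exists x, A x) -> forall x, I0 x -> A x)].

Lemma exists_max_left I0 : left_ideal I0 -> ~ I0 1 ->
  exists L, maximal_left_ideal L /\ forall x, I0 x -> L x.
Proof.
move=> [[I00 I0s] I0m] nI01.
have [A [[As Am nA1 AI0] Amax]] : exists A : classical_sets.set R, PZ I0 A /\
   (forall B : classical_sets.set R, classical_sets.proper A B -> ~ PZ I0 B).
  apply: classical_sets.Zorn_bigcup => F FP Ftot.
  split.
  - move=> x y [X FX Xx] [Y FY Yy].
    case: (Ftot X Y FX FY) => [XY|YX].
    + exists Y => //; case: (FP Y FY) => Ys _ _ _; apply: Ys => //; exact: XY.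
    + exists X => //; case: (FP X FX) => Xs _ _ _; apply: Xs => //; exact: YX.
  - move=> r x [X FX Xx]; exists X => //; case: (FP X FX) => _ Xm _ _; exact: Xm.
  - by move=> [X FX X1]; case: (FP X FX) => _ _ nX1 _; apply: nX1.
  - move=> [z [X FX Xz]] x Ix; exists X => //; case: (FP X FX) => _ _ _ XI.
    by apply: XI => //; exists z.
have PI0 : PZ I0 I0 by split => // _.
have Ane : exists x, A x.
  apply: NNPP => Ae; apply: (Amax I0) => //; split.
    by move=> x Ax; exfalso; apply: Ae; exists x.
  by move=> sub; apply: Ae; exists 0; apply: sub.
have A0 : A 0 by case: Ane => x Ax; rewrite -(subrr x); apply: As.
exists A; split; last exact: AI0.
split; [split; [split|] | |] => //.
move=> K [[K0 Ks] Km] AK nK1 x Kx; apply: NNPP => nAx.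
apply: (Amax K); first by split => // sub; apply: nAx; apply: sub.
split => // _ z Iz; apply: AK; exact: AI0.
Qed.

Lemma J1 (u : R) : jacobson u -> exists y, y * (1 - u) = 1.
Proof.
move=> Ju.
pose I0 z := exists r, z = r * (1 - u).
case: (classic (I0 1)) => [[r E]|nI1]; first by exists r.
have I0li : left_ideal I0.
  split; first split.
  - by exists 0; rewrite mul0r.
  - by move=> a b [r1 ->] [r2 ->]; exists (r1 - r2); rewrite mulrBl.
  - by move=> s a [r ->]; exists (s * r); rewrite mulrA.
have [L [HL IL]] := exists_max_left I0li nI1.
case: (HL) => [[[L0 Ls] Lm] nL1 _]; exfalso; apply: nL1.
have L1u : L (1 - u) by apply: IL; exists 1; rewrite mul1r.
have Lu := Ju L HL.
have := sg_add (conj L0 Ls) Lu L1u.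
by rewrite addrC subrK.
Qed.

Lemma J2 (x : R) : (forall r, exists y, y * (1 - r * x) = 1) -> jacobson x.
Proof.
move=> H L HL; apply: NNPP => nLx.
have [l [r [Ll E]]] := max_left_gen HL nLx.
have [y Hy] := H r.
case: HL => [[_ Lm] nL1 _]; apply: nL1.
have -> : 1 = y * l by rewrite -Hy; congr (_ * _); rewrite E addrK.
exact: Lm.
Qed.

Lemma Jright (x s : R) : jacobson x -> jacobson (x * s).
Proof.
move=> Jx; apply: J2 => r.
have [c Hc] := J1 (Jleft (s * r) Jx).
exists (1 + r * x * c * s).
rewrite mulrBr mulr1 mulrDl mul1r.
have -> : r * x * c * s * (r * (x * s)) = r * x * (c * (s * r * x)) * s.
  by rewrite !mulrA.
have -> : c * (s * r * x) = c - 1 by rewrite -Hc mulrBr mulr1 opprB addrC subrK.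
by rewrite mulrBr mulr1 mulrBl !mulrA [X in _ - X]addrC subrK addrK.
Qed.

Lemma Junit (u : R) : jacobson u -> is_unit (1 - u).
Proof.
move=> Ju; have [y Hy] := J1 Ju.
have Ey : y = 1 - (- (y * u)) by rewrite opprK -Hy mulrBr mulr1 subrK.
have [z Hz] := J1 (sg_neg Jsg (Jleft y Ju)).
rewrite -Ey in Hz.
have Ez : 1 - u = z.
  by have := congr1 (fun t => z * t) Hy; rewrite /= mulrA Hz mul1r mulr1.
by exists y; split => //; rewrite Ez.
Qed.

Lemma J_in_max M : maximal_ideal M -> forall x, jacobson x -> M x.
Proof.
move=> [[[M0 Ms] Ml Mr] nM1 Mmax] j Jj; apply: NNPP => nMj.
pose K x := exists m j', M m /\ jacobson j' /\ x = m + j'.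
have Kid : two_sided_ideal K.
  split; first split.
  - by exists 0, 0; split => //; split; [exact: J0|rewrite addr0].
  - move=> a b [m1 [j1 [H1 [H1' ->]]]] [m2 [j2 [H2 [H2' ->]]]].
    exists (m1 - m2), (j1 - j2); split; first exact: Ms.
    by split; [exact: Jsub|rewrite opprD addrACA].
  - move=> s a [m [j' [H [H' ->]]]]; exists (s * m), (s * j'); split; first exact: Ml.
    by split; [exact: Jleft|rewrite mulrDr].
  - move=> s a [m [j' [H [H' ->]]]]; exists (m * s), (j' * s); split; first exact: Mr.
    by split; [exact: Jright|rewrite mulrDl].
case: (classic (K 1)) => [[m [j' [Hm [Hj' E]]]]|nK1].
  have [y [Hy _]] := Junit Hj'.
  apply: nM1; rewrite -Hy.
  have -> : 1 - j' = m by rewrite E addrK.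
  exact: Mr.
apply: nMj; apply: (Mmax K Kid) => //.
  by move=> x Mx; exists x, 0; split => //; split; [exact: J0|rewrite addr0].
by exists 0, j; split => //; split => //; rewrite add0r.
Qed.


Section Star.
Variable star : R -> R.
Hypothesis Hinv : is_involution star.

Lemma star0 : star 0 = 0.
Proof.
case: Hinv => sa _ _; apply: (@addrI _ (star 0)).
by rewrite -sa !addr0.
Qed.

Lemma starN x : star (- x) = - star x.
Proof.
case: Hinv => sa _ _; apply: (@addrI _ (star x)).
by rewrite -sa !subrr star0.
Qed.

Lemma star1 : star 1 = 1.
Proof.
case: Hinv => _ sm ss.
by have := sm 1 (star 1); rewrite !mul1r ss mul1r.
Qed.

Lemma star1B x : star (1 - x) = 1 - star x.
Proof. by case: Hinv => sa _ _; rewrite sa starN star1. Qed.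

Hypothesis Hsc : strongly_star_clean star.

Lemma idem_proj q : q * q = q -> star q = q.
Proof.
move=> qq; have [f [u [E [ff sf] [v [uv vu]] fu]]] := Hsc q.
have fq : f * q = q * f by rewrite E mulrDl mulrDr ff fu.
have Eu : u = q - f by rewrite E addrC addKr.
have H0 : (1 - f - q) * u = 0.
  rewrite Eu !mulrBl !mulrBr !mul1r fq ff qq.
  by rewrite opprB addrA subrK subrr.
have H1 : 1 - f - q = 0 by rewrite -[LHS]mulr1 -[X in _ * X]uv mulrA H0 mul0r.
have -> : q = 1 - f by apply/eqP; rewrite eq_sym -subr_eq0 H1.
by rewrite star1B sf.
Qed.

Lemma proj_half p r : is_projection star p -> p * r = p * r * p.
Proof.
move=> [pp sp]; case: Hinv => sa sm ss.
set x := p * r * (1 - p).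
have px : p * x = x by rewrite /x !mulrA pp.
have xp : x * p = 0 by rewrite /x -mulrA mulrBl mul1r pp subrr mulr0.
have xx : x * x = 0 by rewrite {2}/x !mulrA xp !mul0r.
have qq : (p + x) * (p + x) = p + x.
  by rewrite mulrDl !mulrDr pp px xp xx addr0 addr0.
have := idem_proj qq; rewrite sa sp => /addrI sx.
have : p * x = 0.
  by rewrite -sx /x !sm sp star1B sp mulrA mulrBr mulr1 pp subrr mul0r.
by rewrite px /x mulrBr mulr1 => /eqP; rewrite subr_eq0 => /eqP.
Qed.

Lemma proj_central p r : is_projection star p -> p * r = r * p.
Proof.
move=> Hp; have Hp' : is_projection star (1 - p).
  case: Hp => pp sp; split; last by rewrite star1B sp.
  by rewrite mulrBl mul1r mulrBr mulr1 pp subrr subr0.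
have := proj_half r Hp'; have := proj_half r Hp.
case: Hp => pp _.
rewrite !mulrBl !mul1r !mulrBr !mulr1.
by move=> E1; rewrite -E1 subrr subr0 => /addrI /oppr_inj.
Qed.

Lemma lin4 (a b c : R) : a - 1 = b - 1 + (c - b) + (a - c).
Proof. by rewrite (addrC (b - 1)) [c - b + _]addrA subrK (addrC (c - 1)) [a - c + _]addrA subrK. Qed.

Section MaxL.
Variable L : R -> Prop.
Hypothesis HL : maximal_left_ideal L.

Definition PL x := forall r, L (x * r).

Lemma Lsg : add_subgroup L. Proof. by case: HL => -[]. Qed.
Lemma Lm r x : L x -> L (r * x). Proof. by case: HL => -[_ H] _ _; apply: H. Qed.
Lemma nL1 : ~ L 1. Proof. by case: HL. Qed.

Lemma PL_L x : PL x -> L x. Proof. by move=> H; rewrite -[x]mulr1; apply: H. Qed.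
Lemma PLsg : add_subgroup PL.
Proof.
split; first by move=> r; rewrite mul0r; exact: Lsg.1.
by move=> x y Hx Hy r; rewrite mulrBl; apply: Lsg.2.
Qed.
Lemma PLl r x : PL x -> PL (r * x).
Proof. by move=> H s; rewrite -mulrA; apply: Lm. Qed.
Lemma PLr r x : PL x -> PL (x * r).
Proof. by move=> H s; rewrite -mulrA; apply: H. Qed.

Lemma PL_proj e : is_projection star e -> L e -> PL e.
Proof. by move=> Hp Le r; rewrite (proj_central r Hp); apply: Lm. Qed.

Lemma proj1B e : is_projection star e -> is_projection star (1 - e).
Proof.
case=> pp sp; split; last by rewrite star1B sp.
by rewrite mulrBl mul1r mulrBr mulr1 pp subrr subr0.
Qed.

Lemma L_dich e : is_projection star e -> L e \/ L (1 - e).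
Proof.
move=> Hp; case: (classic (L e)) => Le; first by left.
right; have [l [r [Ll E]]] := max_left_gen HL Le.
have H0 : (1 - e) * (r * e) = 0.
  by rewrite -(proj_central r Hp) mulrA mulrBl mul1r Hp.1 subrr mul0r.
have := congr1 (fun t => (1 - e) * t) E; rewrite /= mulr1 mulrDr H0 addr0 => ->.
exact: Lm.
Qed.

Lemma lemE z : exists t t', [/\ t * t' = 1, t' * t = 1 & PL (z - t) \/ PL (z - 1 - t)].
Proof.
have [e [t [E Hp [t' [tt' t't]] _]]] := Hsc z.
exists t, t'; split => //.
case: (L_dich Hp) => Le.
  by left; rewrite E addrK; apply: PL_proj.
right; have -> : z - 1 - t = - (1 - e) by rewrite E addrAC addrK opprB.
apply: (sg_neg PLsg); apply: PL_proj => //; exact: proj1B.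
Qed.

Lemma lemD x : ~ L x -> exists y, PL (x * y - 1) /\ PL (y * x - 1).
Proof.
move=> nLx; have [l [r [Ll E]]] := max_left_gen HL nLx.
have [z Hz] : exists z, PL (z * x - 1).
  have [t [t' [tt' t't [Ht|Ht]]]] := lemE (r * x).
    exists (t' * r).
    have -> : t' * r * x - 1 = t' * (r * x - t) by rewrite mulrBr t't mulrA.
    exact: PLl.
  exfalso; apply: nL1.
  have El : l = 1 - r * x by rewrite E addrK.
  have Lt : L t.
    have -> : t = - (r * x - 1 - t) - l.
      by rewrite El [-(r * x - 1 - t)]opprB [-(1 - r * x)]opprB subrK.
    apply: Lsg.2 => //; apply: (sg_neg Lsg); exact: PL_L.
  by rewrite -t't; apply: Lm.
have [t [t' [tt' t't [Ht|Ht]]]] := lemE (x * z).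
  exists (z * t'); split.
    have -> : x * (z * t') - 1 = (x * z - t) * t' by rewrite mulrBl tt' mulrA.
    exact: PLr.
  rewrite (lin4 (z * t' * x) (z * x) (z * x * (z * t') * x)).
  apply: (sg_add PLsg); first apply: (sg_add PLsg) => //.
    have -> : z * x * (z * t') * x - z * x = z * (x * (z * t') - 1) * x.
      by rewrite mulrBr mulr1 mulrBl !mulrA.
    apply: PLr; apply: PLl.
    have -> : x * (z * t') - 1 = (x * z - t) * t' by rewrite mulrBl tt' mulrA.
    exact: PLr.
  have -> : z * t' * x - z * x * (z * t') * x = - (z * x - 1) * (z * t' * x).
    by rewrite mulNr mulrBl mul1r opprB !mulrA.
  by apply: PLr; apply: (sg_neg PLsg).
exfalso; apply: nLx; apply: PL_L.
set a := x * z - 1 - t in Ht.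
have Ha : PL ((1 - x * z + a) * x).
  rewrite mulrDl; apply: (sg_add PLsg); last exact: PLr.
  have -> : (1 - x * z) * x = - (x * (z * x - 1)).
    by rewrite mulrBl mul1r mulrBr mulr1 opprB mulrA.
  by apply: (sg_neg PLsg); apply: PLl.
have Ea : 1 - x * z + a = - t.
  by rewrite /a addrA [1 - x * z + _]addrA subrK subrr sub0r.
rewrite Ea mulNr in Ha.
have Htx : PL (t * x) by rewrite -[t * x]opprK; apply: (sg_neg PLsg).
by rewrite -[x]mul1r -t't -mulrA; apply: PLl.
Qed.

Lemma PL_max : maximal_ideal PL.
Proof.
split.
- split; [exact: PLsg | move=> r x; exact: PLl | move=> r x; exact: PLr].
- by move=> H; apply: nL1; apply: PL_L.
move=> K [Ksg Kl Kr] PK nK1 x Kx; apply: NNPP => nPx.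
have [r nL] := not_all_ex_not _ _ nPx.
have [y [Hy _]] := lemD nL.
apply: nK1.
have -> : 1 = x * r * y - (x * r * y - 1) by rewrite opprB addrC subrK.
apply: Ksg.2; [exact: (Kr y _ (Kr r _ Kx)) | exact: PK].
Qed.

Hypothesis Hc2 : forall M : R -> Prop, maximal_ideal M -> ~ one_sum_two_units_mod M.

Lemma lemU w : is_unit w -> L (w - 1).
Proof.
move=> [v [wv vw]]; apply: NNPP => nL.
have [y [H1 H2]] := lemD nL.
apply: (Hc2 PL_max); exists w, (1 - w); split.
- by exists v; rewrite wv vw subrr; split; exact: PLsg.1.
- exists (- y); rewrite mulrN -mulNr opprB mulNr -mulrN opprB; split => //.
- by rewrite (addrC w) subrK subrr; exact: PLsg.1.
Qed.

End MaxL.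
End Star.
Lemma lin5 (e a b c j : R) : e + a + (b + c) - (e + j) = a + b + c - j.
Proof. by rewrite -[e + a + (b + c)]addrA (addrC e) addrKA addrA. Qed.
Lemma lin6 (A B u : R) : (A - B) - (A - u) + (B - 1) = u - 1.
Proof. by rewrite opprB (addrC (A - B)) !subrKA. Qed.
Lemma lin7 (u v : R) : -1 = (1 - (u + v)) + (u - 1) + (v - 1).
Proof. by rewrite (addrC (1 - (u + v))) subrKA opprD addNKr addKr. Qed.
Lemma lin8 (e w : R) : e + w - (1 - e) = w - 1 + (e + e).
Proof. by rewrite opprB addrACA addrC. Qed.
End Aux.


Theorem corollary2p5 (R : pzRingType) (star : R -> R) :
  is_involution star ->
  (strongly_J_star_clean star <->
     (strongly_star_clean star /\
      forall M : R -> Prop, maximal_ideal M -> ~ one_sum_two_units_mod M)).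
Proof.
move=> Hinv; split.
- move=> HJ; split.
  + move=> a; have [e [u [E Hp Ju Ec]]] := HJ (a - 1).
    have ue : u * e = e * u.
      by move: Ec; rewrite E mulrDl mulrDr Hp.1 => /addrI.
    exists e, (1 + u); split => //.
    * by rewrite addrCA -E addrC subrK.
    * by have := Junit (sg_neg (@Jsg _) Ju); rewrite opprK.
    * by rewrite mulrDr mulrDl mulr1 mul1r ue.
  + move=> M HM [u [v [[yu [Hu1 Hu2]] [yv [Hv1 Hv2]] Huv]]].
    case: (HM) => [[Msg Ml Mr] nM1 _].
    have Mx2 : forall x, M (x * x - x).
      move=> x; apply: (J_in_max HM); have [e [j [E Hp Jj Ec]]] := HJ x.
      have je : j * e = e * j.
        by move: Ec; rewrite E mulrDl mulrDr Hp.1 => /addrI.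
      have -> : x * x - x = e * j + j * e + j * j - j.
        by rewrite E mulrDl !mulrDr Hp.1 lin5.
      apply: Jsub => //; apply: (sg_add (@Jsg _)); last exact: Jleft.
      apply: (sg_add (@Jsg _)); first exact: Jleft.
      by rewrite je; exact: Jleft.
    have Mu : forall w yw, M (w * yw - 1) -> M (w - 1).
      move=> w yw Hw.
      have <- : (w * w - w) * yw - w * (w * yw - 1) + (w * yw - 1) = w - 1.
        by rewrite mulrBl mulrBr mulr1 !mulrA lin6.
      apply: (sg_add Msg) => //; apply: Msg.2; [exact: Mr | exact: Ml].
    apply: nM1; rewrite -[1]opprK; apply: (sg_neg Msg).
    rewrite (lin7 u v); apply: (sg_add Msg); last exact: (Mu v yv).
    by apply: (sg_add Msg) => //; exact: (Mu u yu).
- move=> [Hsc Hc2] a; have [e [w [E Hp Hw ew]]] := Hsc a.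
  exists (1 - e), (a - (1 - e)); split.
  + by rewrite addrC subrK.
  + exact: proj1B.
  + move=> L HL.
    have U := lemU Hinv Hsc HL Hc2.
    have L2 : L (1 + 1).
      have Hm1 : is_unit (-1 : R) by exists (-1); rewrite mulrNN mulr1.
      have := sg_neg (Lsg HL) (U _ Hm1); rewrite opprB opprK addrC => H.
      exact: H.
    rewrite E lin8; apply: (sg_add (Lsg HL)); first exact: U.
    by have := Lm HL e L2; rewrite mulrDr mulr1.
  + have ae : a * e = e * a by rewrite E mulrDl mulrDr Hp.1 ew.
    by rewrite mulrBr mulrBl mulr1 mul1r ae.
Qed.
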